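(* There exists an efficient, hence regret-free, strategy.
   Context: Let $\mathcal{X}$ be a finite set of alternatives. A proto-ranking is an irreflexive and transitive binary relation on $\mathcal{X}$; a ranking is a total proto-ranking; a tournament is a total and asymmetric binary relation on $\mathcal{X}$. The chair has a fixed preference $\succ$, a ranking on $\mathcal{X}$. Interaction: given a tournament $\mathrel{W}$, start from $R_0=\varnothing$; in each period with $R_{t-1}$ not total the chair offers a pair $\{x,y\}$ unranked by $R_{t-1}$, the winner is $x$ if $x\mathrel{W}y$ and $y$ otherwise, and $R_t$ is the transitive closure of $R_{t-1}\cup\{(\text{winner},\text{loser})\}$; stop when $R_t$ is total. A strategy assigns to each non-terminal history (sequence of (winner, loser) pairs) a pair unranked at it; its outcome under $\mathrel{W}$ is the final ranking. A ranking is $\mathrel{W}$-feasible if it is the outcome under $\mathrel{W}$ of some strategy. $R$ is more aligned with $\succ$ than $R'$ if for all $x\succ y$, $xR'y$ implies $xRy$. A ranking is $\mathrel{W}$-unimprovable if no other $\mathrel{W}$-feasible ranking is more aligned with $\succ$. A strategy is regret-free if for every tournament $\mathrel{W}$ its outcome under $\mathrel{W}$ is $\mathrel{W}$-unimprovable. A ranking $R$ is $\mathrel{W}$-efficient if $x\succ y$ and $x\mathrel{W}y$ imply $xRy$; a strategy is efficient if for every tournament $\mathrel{W}$ its outcome under $\mathrel{W}$ is $\mathrel{W}$-efficient. *)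

(* Defs.v *)
From mathcomp Require Import all_boot.
Set Implicit Arguments. Unset Strict Implicit. Unset Printing Implicit Defensive.

Section Defs.
Variable X : finType.

Definition irreflexive_rel (R : rel X) := forall x, ~~ R x x.
Definition transitive_rel (R : rel X) := forall x y z, R x y -> R y z -> R x z.
Definition total_rel (R : rel X) := forall x y, x != y -> R x y || R y x.
Definition asymmetric_rel (R : rel X) := forall x y, R x y -> ~~ R y x.

Definition is_proto_ranking (R : rel X) := irreflexive_rel R /\ transitive_rel R.
Definition is_ranking (R : rel X) := is_proto_ranking R /\ total_rel R.
Definition is_tournament (W : rel X) := total_rel W /\ asymmetric_rel W.

(* A history is a sequence of (winner, loser) pairs. *)
Definition history := seq (X * X).

(* The relation R_t determined by a history: the transitive closure of the
   set of (winner, loser) pairs recorded so far (R_0 = empty). *)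
Definition rel_of (h : history) : rel X :=
  fun x y => [exists z, ((x, z) \in h) && connect (fun a b => (a, b) \in h) z y].

Definition unranked (R : rel X) (p : X * X) :=
  (p.1 != p.2) && ~~ R p.1 p.2 && ~~ R p.2 p.1.

(* A strategy assigns to each non-terminal history an unranked pair.
   (Option-valued so that strategies exist also when |X| <= 1; the value at
   terminal histories is irrelevant.) *)
Definition strategy := history -> option (X * X).
Definition is_strategy (s : strategy) :=
  forall h : history, ~ total_rel (rel_of h) ->
    exists p, s h = Some p /\ unranked (rel_of h) p.

Definition step (s : strategy) (W : rel X) (h : history) : history :=
  if [forall x, forall y, (x != y) ==> (rel_of h x y || rel_of h y x)] then h
  else match s h with
       | Some (x, y) => rcons h (if W x y then (x, y) else (y, x))
       | None => h
       end.

Definition run (s : strategy) (W : rel X) (n : nat) : history :=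
  iter n (step s W) [::].

Definition is_outcome (s : strategy) (W : rel X) (R : rel X) :=
  exists n, total_rel (rel_of (run s W n)) /\ R =2 rel_of (run s W n).

Definition feasible (W : rel X) (R : rel X) :=
  is_ranking R /\ exists s, is_strategy s /\ is_outcome s W R.

Definition more_aligned (pref : rel X) (R R' : rel X) :=
  forall x y, pref x y -> R' x y -> R x y.

Definition unimprovable (pref W : rel X) (R : rel X) :=
  forall R', feasible W R' -> more_aligned pref R' R -> R' =2 R.

Definition regret_free (pref : rel X) (s : strategy) :=
  forall W, is_tournament W ->
    exists R, is_outcome s W R /\ unimprovable pref W R.

Definition efficient_ranking (pref W : rel X) (R : rel X) :=
  forall x y, pref x y -> W x y -> R x y.

Definition efficient (pref : rel X) (s : strategy) :=
  forall W, is_tournament W ->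
    exists R, is_outcome s W R /\ efficient_ranking pref W R.

End Defs.

(* Main.v *)
Require Import Defs.
From mathcomp Require Import all_boot.
From Stdlib Require Import Relations.
Set Implicit Arguments. Unset Strict Implicit. Unset Printing Implicit Defensive.

Definition E (X : finType) (h : history X) : rel X := fun a b => (a, b) \in h.

Lemma connect_rt (X : finType) (e : rel X) x y :
  connect e x y <-> clos_refl_trans X e x y.
Proof.
split.
- move/connectP=> [p]; elim: p x => [|z p IH] x /=.
    by move=> _ ->; apply: rt_refl.
  move=> /andP[exz pz] hy; apply: rt_trans (rt_step _ _ _ _ exz) (IH z pz hy).
- elim=> [a b hab | a | a b c _ IH1 _ IH2].
  + exact: connect1.
  + exact: connect0.
  + exact: connect_trans IH1 IH2.
Qed.

Lemma ct_rt (X : Type) (e : relation X) x z y :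
  clos_trans X e x z -> clos_refl_trans X e z y -> clos_trans X e x y.
Proof.
move=> hxz hzy; elim: hzy x hxz => [a b hab | a | a b c _ IH1 _ IH2] x hx.
- exact: t_trans hx (t_step _ _ _ _ hab).
- exact: hx.
- exact: IH2 _ (IH1 _ hx).
Qed.

Lemma relofP (X : finType) (h : history X) x y :
  rel_of h x y <-> clos_trans X (E h) x y.
Proof.
split.
- move/existsP=> [z /andP[hxz /connect_rt hzy]].
  exact: ct_rt (t_step _ _ _ _ hxz) hzy.
- elim=> [a b hab | a b c _ IH1 _ IH2].
  + by apply/existsP; exists b; rewrite /E in hab; rewrite hab connect0.
  + move/existsP: IH2 => [z2 /andP[hb2 hz2c]].
    move/existsP: IH1 => [z1 /andP[ha1 hz1b]].
    apply/existsP; exists z1; rewrite ha1 /=.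
    apply: connect_trans hz1b _; apply: connect_trans _ hz2c; exact: connect1.
Qed.

Lemma rel_trans (X : finType) (h : history X) x y z :
  rel_of h x y -> rel_of h y z -> rel_of h x z.
Proof. by move=> /relofP h1 /relofP h2; apply/relofP; exact: t_trans h1 h2. Qed.

Lemma E_rcons (X : finType) (h : history X) p a b :
  E (rcons h p) a b = E h a b || ((a, b) == p).
Proof. by rewrite /E mem_rcons in_cons orbC. Qed.

Lemma rel_mono (X : finType) (h : history X) p x y :
  rel_of h x y -> rel_of (rcons h p) x y.
Proof.
move/relofP=> H; apply/relofP; elim: H => [a b hab | a b c _ IH1 _ IH2].
- by apply: t_step; rewrite E_rcons hab.
- exact: t_trans IH1 IH2.
Qed.

Lemma rel_rcons (X : finType) (h : history X) w l x y :
  rel_of (rcons h (w, l)) x y <->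
  rel_of h x y \/ ((x = w \/ rel_of h x w) /\ (l = y \/ rel_of h l y)).
Proof.
split.
- move/relofP; elim=> [a b | a b c _ IH1 _ IH2].
  + rewrite E_rcons => /orP[hab | /eqP [-> ->]].
      by left; apply/relofP; apply: t_step.
    by right; split; left.
  + case: IH1 => [h1 | [h1 h2]]; case: IH2 => [h3 | [h3 h4]].
    * by left; apply: rel_trans h1 h3.
    * right; split=> //; right; case: h3 => [<- // | h3]; exact: rel_trans h1 h3.
    * right; split=> //; right; case: h2 => [-> // | h2]; exact: rel_trans h2 h3.
    * by right; split.
- have ewl : rel_of (rcons h (w, l)) w l.
    by apply/existsP; exists l; rewrite mem_rcons in_cons eqxx connect0.
  case=> [H | [[-> | H1] [<- | H2]]].
  + exact: rel_mono.
  + exact: ewl.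
  + exact: rel_trans ewl (rel_mono _ H2).
  + exact: rel_trans (rel_mono _ H1) ewl.
  + exact: rel_trans (rel_trans (rel_mono _ H1) ewl) (rel_mono _ H2).
Qed.

Lemma exists_min (T : finType) (r : rel T) (P : pred T) :
  (forall x, ~~ r x x) -> (forall x y z, r x y -> r y z -> r x z) ->
  (exists x, P x) -> exists x, P x /\ forall y, P y -> ~~ r y x.
Proof.
move=> irr tr [x0 Px0].
case: (arg_minnP (fun i => #|[pred z | r z i]|) Px0) => x Px minx.
exists x; split=> // y Py; apply/negP=> ryx.
have := minx y Py.
have: [pred z | r z y] \proper [pred z | r z x].
  apply/properP; split.
    by apply/subsetP=> z; rewrite !inE => rzy; exact: tr rzy ryx.
  by exists y; rewrite !inE ?ryx ?irr.
move/proper_card; rewrite ltnNge => /negP; done.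
Qed.

Definition totb (X : finType) (h : history X) :=
  [forall x, forall y, (x != y) ==> (rel_of h x y || rel_of h y x)].

Lemma totP (X : finType) (h : history X) : reflect (total_rel (rel_of h)) (totb h).
Proof.
apply: (iffP forallP) => H.
- by move=> x y; move/forallP: (H x) => /(_ y) /implyP.
- by move=> x; apply/forallP=> y; apply/implyP; apply: H.
Qed.

Lemma not_tot (X : finType) (h : history X) :
  ~ total_rel (rel_of h) -> exists p, unranked (rel_of h) p.
Proof.
move=> H; have: ~~ totb h by apply/negP => /totP.
rewrite /totb negb_forall => /existsP[x]; rewrite negb_forall => /existsP[y].
rewrite negb_imply negb_or => /andP[nxy /andP[n1 n2]].
by exists (x, y); rewrite /unranked /= nxy n1 n2.
Qed.

Definition settled (X : finType) (pref : rel X) (h : history X) (e : X) :=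
  [forall f, pref f e ==> rel_of h e f || rel_of h f e].

Definition bsel (X : finType) (pref : rel X) (h : history X) :=
  [pick b | ~~ settled pref h b && [forall b', pref b' b ==> settled pref h b']].

Definition cand (X : finType) (pref : rel X) (h : history X) (b a : X) :=
  pref a b && ~~ rel_of h a b && ~~ rel_of h b a.

Definition asel (X : finType) (pref : rel X) (h : history X) (b : X) :=
  [pick a | cand pref h b a && [forall a', cand pref h b a' ==> ~~ rel_of h a a']].

Definition strat (X : finType) (pref : rel X) : strategy X := fun h =>
  match bsel pref h with
  | Some b => match asel pref h b with
              | Some a => Some (a, b)
              | None => [pick p | unranked (rel_of h) p]
              end
  | None => [pick p | unranked (rel_of h) p]
  end.

Lemma strat_ok (X : finType) (pref : rel X) : is_ranking pref -> is_strategy (strat pref).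
Proof.
move=> [[pirr _] _] h /not_tot [p0 hp0].
have fb : exists p, [pick p | unranked (rel_of h) p] = Some p /\ unranked (rel_of h) p.
  by case: pickP => [p hp | /(_ p0)]; [exists p | rewrite hp0].
rewrite /strat; case: (bsel pref h) => [b|] //; rewrite /asel; case: pickP => [a /andP[ca _] | _] //.
exists (a, b); split=> //; move: ca; rewrite /cand /unranked /= => /andP[/andP[pab ->] ->].
by rewrite !andbT; apply/eqP=> eab; move: pab; rewrite eab (negbTE (pirr b)).
Qed.

Definition cnt (X : finType) (h : history X) := #|[pred p : X * X | rel_of h p.1 p.2]|.

Lemma step_eq (X : finType) (s : strategy X) W h x y :
  ~~ totb h -> s h = Some (x, y) ->
  step s W h = rcons h (if W x y then (x, y) else (y, x)).
Proof. by move=> nt hs; rewrite /step -/(totb h) (negbTE nt) hs. Qed.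

Lemma step_tot (X : finType) (s : strategy X) W h : totb h -> step s W h = h.
Proof. by move=> t; rewrite /step -/(totb h) t. Qed.

Lemma step_grow (X : finType) (s : strategy X) W h :
  is_strategy s -> ~ total_rel (rel_of h) -> cnt h < cnt (step s W h).
Proof.
move=> hs nt; have nt' : ~~ totb h by apply/negP => /totP.
have [[x y] [hsh /andP[/andP[/= nxy n1] n2]]] := hs h nt.
rewrite (step_eq W nt' hsh).
set wl := (if W x y then (x, y) else (y, x)).
have hwl : rel_of (rcons h wl) wl.1 wl.2.
  by case: wl => w l; apply/rel_rcons; right; split; left.
have nwl : ~~ rel_of h wl.1 wl.2 by rewrite /wl; case: (W x y).
apply: proper_card; apply/properP; split.
  by apply/subsetP=> [[a b]]; rewrite !inE /= => hab; exact: rel_mono.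
by exists wl; rewrite !inE ?hwl.
Qed.

Lemma run_tot (X : finType) (s : strategy X) W :
  is_strategy s -> total_rel (rel_of (run s W #|{: X * X}|.+1)).
Proof.
move=> hs.
have H : forall n, total_rel (rel_of (run s W n)) \/ n <= cnt (run s W n).
  elim=> [|n IH]; first by right.
  rewrite /run iterS -/(run s W n).
  have [t | nt] := boolP (totb (run s W n)).
    by left; rewrite step_tot //; apply/totP.
  right; case: IH => [/totP t | IH]; first by rewrite t in nt.
  apply: leq_ltn_trans IH (step_grow W hs _); by move/totP; apply/negP.
case: (H #|{: X * X}|.+1) => // hc; exfalso.
by move: (leq_trans hc (max_card _)); rewrite ltnn.
Qed.

Lemma run_edges (X : finType) (s : strategy X) W n :
  is_strategy s -> is_tournament W -> forall e, e \in run s W n -> W e.1 e.2.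
Proof.
move=> hs [Wt Wa]; elim: n => [|n IH] //= e.
rewrite -/(run s W n).
have [t | nt] := boolP (totb (run s W n)).
  by rewrite step_tot //; apply: IH.
have nt' : ~ total_rel (rel_of (run s W n)) by move/totP; apply/negP.
have [[x y] [hsh /andP[/andP[/= nxy _] _]]] := hs _ nt'.
rewrite (step_eq W nt hsh) mem_rcons in_cons => /orP[/eqP -> | /IH //].
case: ifP => //= nW; move: (Wt x y nxy); rewrite nW /=; done.
Qed.

Definition good (X : finType) (pref : rel X) (h : history X) (e0 : X) :=
  forall e, pref e e0 -> settled pref h e.

Definition Inv (X : finType) (pref W : rel X) (h : history X) :=
  [/\ forall x, ~~ rel_of h x x,
      forall x y, pref x y -> W x y -> ~~ rel_of h y x &
      forall c d, rel_of h c d -> good pref h c /\ good pref h d].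

Lemma settled_mono (X : finType) (pref : rel X) h p e :
  settled pref h e -> settled pref (rcons h p) e.
Proof.
move/forallP=> H; apply/forallP=> f; apply/implyP=> pf.
by case/orP: (implyP (H f) pf) => H1; apply/orP; [left|right]; apply: rel_mono.
Qed.

Lemma good_mono (X : finType) (pref : rel X) h p e :
  good pref h e -> good pref (rcons h p) e.
Proof. by move=> H f /H; apply: settled_mono. Qed.

Lemma irr_rcons (X : finType) (h : history X) w l :
  (forall x, ~~ rel_of h x x) -> w != l -> ~~ rel_of h l w ->
  forall x, ~~ rel_of (rcons h (w, l)) x x.
Proof.
move=> irr nwl nlw x; apply/negP => /rel_rcons [H | [[ex | H1] [ey | H2]]].
- by move: (irr x); rewrite H.
- by move: nwl; rewrite -ex ey eqxx.
- by move: nlw; rewrite -ex H2.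
- by move: nlw; rewrite ey H1.
- by move: nlw; rewrite (rel_trans H2 H1).
Qed.

Lemma C_rcons (X : finType) (pref : rel X) (h : history X) w l :
  (forall c d, rel_of h c d -> good pref h c /\ good pref h d) ->
  good pref h w -> good pref h l ->
  forall c d, rel_of (rcons h (w, l)) c d ->
    good pref (rcons h (w, l)) c /\ good pref (rcons h (w, l)) d.
Proof.
move=> C gw gl c d /rel_rcons [H | [H1 H2]].
  by case: (C _ _ H) => g1 g2; split; apply: good_mono.
split; apply: good_mono.
- by case: H1 => [-> // | H1]; case: (C _ _ H1).
- by case: H2 => [<- // | H2]; case: (C _ _ H2).
Qed.

Lemma inv_core (X : finType) (pref W : rel X) (h : history X) a b :
  is_ranking pref -> is_tournament W -> Inv pref W h ->
  ~~ settled pref h b -> (forall b', pref b' b -> settled pref h b') ->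
  cand pref h b a -> (forall a', cand pref h b a' -> ~~ rel_of h a a') ->
  Inv pref W (rcons h (if W a b then (a, b) else (b, a))).
Proof.
move=> [[pirr ptr] ptot] [Wt Wa] [A B C] hb1 hb2 ca amin.
move: (ca); rewrite /cand => /andP[/andP[pab nab] nba].
have neab : a != b by apply/eqP=> e; move: pab; rewrite e (negbTE (pirr b)).
have T : forall c d, rel_of h c d -> (c = b \/ pref c b) /\ (d = b \/ pref d b).
  move=> c d H; case: (C _ _ H) => g1 g2.
  have aux : forall c, good pref h c -> c = b \/ pref c b.
    move=> c0 g; have [/eqP -> | ne] := boolP (c0 == b); first by left.
    case/orP: (ptot _ _ ne) => p; first by right.
    by move: hb1; rewrite (g _ p).
  by split; apply: aux.
have gb : good pref h b by [].
have ga : good pref h a by move=> e pe; apply: hb2; exact: ptr pe pab.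
have sett : forall x y, pref y b -> pref x y -> rel_of h x y || rel_of h y x.
  move=> x y py pxy; move/forallP: (hb2 _ py) => /(_ x) /implyP /(_ pxy).
  by rewrite orbC.
case hW: (W a b).
- split.
  + by apply: irr_rcons.
  + move=> x y pxy Wxy; apply/negP => /rel_rcons [H | [H1 H2]].
      by move: (B _ _ pxy Wxy); rewrite H.
    have yb : y != b.
      apply/eqP=> e; subst y; case: H1 => [e | H1]; first by rewrite e eqxx in neab.
      by rewrite H1 in nba.
    have py : pref y b.
      case: H1 => [-> // | H1]; case: (T _ _ H1) => [[e|//] _].
      by rewrite e eqxx in yb.
    have px : pref x b by exact: ptr pxy py.
    have H2' : rel_of h b x.
      case: H2 => // e; subst x; by move: (pirr b); rewrite px.
    case/orP: (sett _ _ py pxy) => H3.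
      have H4 : rel_of h b y := rel_trans H2' H3.
      case: H1 => [e | H1]; first by subst y; rewrite H4 in nba.
      by rewrite (rel_trans H4 H1) in nba.
    by move: (B _ _ pxy Wxy); rewrite H3.
  + by apply: C_rcons.
- have Wba : W b a by move: (Wt _ _ neab); rewrite hW.
  split.
  + apply: irr_rcons => //; by rewrite eq_sym.
  + move=> x y pxy Wxy; apply/negP => /rel_rcons [H | [H1 H2]].
      by move: (B _ _ pxy Wxy); rewrite H.
    have ey : y = b.
      case: H1 => // H1; case: (T _ _ H1) => [[// | py] _].
      case/orP: (sett _ _ py pxy) => H3.
        have H4 : rel_of h x b := rel_trans H3 H1.
        case: H2 => [e | H2]; first by subst x; rewrite H4 in nab.
        by rewrite (rel_trans H2 H4) in nab.
      by move: (B _ _ pxy Wxy); rewrite H3.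
    subst y.
    case: H2 => [e | H2].
      by subst x; move: (Wa _ _ Wba); rewrite Wxy.
    have cx : cand pref h b x.
      rewrite /cand pxy /=; apply/andP; split.
        by apply/negP=> H3; rewrite (rel_trans H2 H3) in nab.
      by apply/negP=> H3; move: (B _ _ pxy Wxy); rewrite H3.
    by move: (amin _ cx); rewrite H2.
  + by apply: C_rcons.
Qed.

Lemma bsel_some (X : finType) (pref : rel X) (h : history X) :
  is_ranking pref -> ~ total_rel (rel_of h) ->
  exists b, bsel pref h = Some b.
Proof.
move=> [[pirr ptr] ptot] /not_tot [[x y] /andP[/andP[/= nxy n1] n2]].
have ex : exists z, ~~ settled pref h z.
  case/orP: (ptot _ _ nxy) => p.
    exists y; apply/negP=> /forallP /(_ x) /implyP /(_ p).
    by rewrite (negbTE n1) (negbTE n2).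
  exists x; apply/negP=> /forallP /(_ y) /implyP /(_ p).
  by rewrite (negbTE n1) (negbTE n2).
have [b [hb hmin]] := exists_min (P := fun z => ~~ settled pref h z) pirr ptr ex.
rewrite /bsel; case: pickP => [b' _ | /(_ b)]; first by exists b'.
rewrite hb /=; move/negP; case; apply/forallP=> b'; apply/implyP=> pb.
by apply/negPn/negP=> ns; move: (hmin _ ns); rewrite pb.
Qed.

Lemma asel_some (X : finType) (pref : rel X) (h : history X) b :
  (forall x, ~~ rel_of h x x) -> ~~ settled pref h b ->
  exists a, asel pref h b = Some a.
Proof.
move=> irr; rewrite /settled negb_forall => /existsP[f].
rewrite negb_imply negb_or => /andP[pf /andP[n1 n2]].
have cf : cand pref h b f by rewrite /cand pf n1 n2.
have [a [ha hmin]] := exists_min (r := fun u v => rel_of h v u)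
   (P := cand pref h b) irr (fun x y z h1 h2 => rel_trans h2 h1) (ex_intro _ f cf).
rewrite /asel; case: pickP => [a' _ | /(_ a)]; first by exists a'.
rewrite ha /=; move/negP; case; apply/forallP=> a'; apply/implyP=> ca'.
exact: hmin.
Qed.

Lemma bsel_spec (X : finType) (pref : rel X) (h : history X) b :
  bsel pref h = Some b ->
  ~~ settled pref h b /\ (forall b', pref b' b -> settled pref h b').
Proof.
rewrite /bsel; case: pickP => // b' /andP[h1 /forallP h2] [<-].
by split=> // c; apply/implyP.
Qed.

Lemma asel_spec (X : finType) (pref : rel X) (h : history X) b a :
  asel pref h b = Some a ->
  cand pref h b a /\ (forall a', cand pref h b a' -> ~~ rel_of h a a').
Proof.
rewrite /asel; case: pickP => // a' /andP[h1 /forallP h2] [<-].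
by split=> // c; apply/implyP.
Qed.

Lemma inv_step (X : finType) (pref W : rel X) (h : history X) :
  is_ranking pref -> is_tournament W -> Inv pref W h ->
  Inv pref W (step (strat pref) W h).
Proof.
move=> hp hW hI.
have [t | nt] := boolP (totb h); first by rewrite step_tot.
have nt' : ~ total_rel (rel_of h) by move/totP; apply/negP.
have [b hb] := bsel_some hp nt'.
have [hb1 hb2] := bsel_spec hb.
case: (hI) => A _ _.
have [a ha] := asel_some A hb1.
have [ca amin] := asel_spec ha.
have hs : strat pref h = Some (a, b) by rewrite /strat hb ha.
rewrite (step_eq W nt hs).
exact: inv_core.
Qed.

Lemma inv_run (X : finType) (pref W : rel X) n :
  is_ranking pref -> is_tournament W -> Inv pref W (run (strat pref) W n).
Proof.
move=> hp hW; elim: n => [|n IH].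
  split.
  - by move=> x; apply/negP=> /existsP[z]; rewrite in_nil.
  - by move=> x y _ _; apply/negP=> /existsP[z]; rewrite in_nil.
  - by move=> c d /existsP[z]; rewrite in_nil.
by rewrite /run iterS -/(run _ W n); apply: inv_step.
Qed.

Lemma eff_unimp (X : finType) (pref W : rel X) (h : history X) :
  is_ranking pref -> is_tournament W -> total_rel (rel_of h) ->
  (forall x, ~~ rel_of h x x) -> efficient_ranking pref W (rel_of h) ->
  unimprovable pref W (rel_of h).
Proof.
move=> [[pirr ptr] ptot] hW htot hirr heff R' [[[R'irr R'tr] R'tot] [s' [hs' [n' [_ eqR']]]]] mal.
have edges := @run_edges X s' W n' hs' hW.
case: (hW) => Wt Wa.
have sub : forall x y, R' x y -> rel_of h x y.
  move=> x y; rewrite eqR' => /relofP; elim=> [a b hab | a b c _ IH1 _ IH2].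
  - have Wab : W a b := edges (a, b) hab.
    have R'ab : R' a b by rewrite eqR'; apply/relofP; apply: t_step.
    have [// | nR] := boolP (rel_of h a b).
    have neab : a != b by apply/eqP=> e; subst b; move: (Wa _ _ Wab); rewrite Wab.
    have Rba : rel_of h b a by move: (htot _ _ neab); rewrite (negbTE nR).
    case/orP: (ptot _ _ neab) => p; first by rewrite (heff _ _ p Wab) in nR.
    by move: (R'irr a); rewrite (R'tr _ _ _ R'ab (mal _ _ p Rba)).
  - exact: rel_trans IH1 IH2.
move=> x y; apply/idP/idP; first exact: sub.
move=> Rxy; apply/negPn/negP=> nR'.
have nexy : x != y by apply/eqP=> e; subst y; move: (hirr x); rewrite Rxy.
have R'yx : R' y x by move: (R'tot _ _ nexy); rewrite (negbTE nR').
by move: (hirr x); rewrite (rel_trans Rxy (sub _ _ R'yx)).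
Qed.

Theorem corollary2 (X : finType) (pref : rel X) :
  is_ranking pref ->
  exists s : strategy X,
    is_strategy s /\ efficient pref s /\ regret_free pref s.
Proof.
move=> hp; exists (strat pref); have hs := strat_ok hp.
have key : forall W, is_tournament W ->
  let h := run (strat pref) W #|{: X * X}|.+1 in
  [/\ is_outcome (strat pref) W (rel_of h), forall x, ~~ rel_of h x x,
      total_rel (rel_of h) & efficient_ranking pref W (rel_of h)].
  move=> W hW h.
  have ht : total_rel (rel_of h) := run_tot W hs.
  have [A B _] := inv_run #|{: X * X}|.+1 hp hW.
  split=> //; first by exists #|{: X * X}|.+1.
  move=> x y pxy Wxy; case: hp => [[pirr _] _].
  have nexy : x != y by apply/eqP=> e; subst y; move: (pirr x); rewrite pxy.
  by move: (ht _ _ nexy) (B _ _ pxy Wxy) => /orP[-> // | ->].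
split=> //; split.
- by move=> W hW; have [o _ _ e] := key W hW; eexists; split; [exact: o | exact: e].
- move=> W hW; have [o i t e] := key W hW; eexists; split; first exact: o.
  exact: eff_unimp.
Qed.
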